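(* Let $A$ be an infinite countable set, let $\{a_n\}_{n\in A}$ be a family of non-negative numbers such that for some $c>0$ the set $\{n\in A:a_n\leq c\}$ is infinite, and let $\{b_n\}_{n\in\mathbb{Z}_+}$ be a sequence of numbers in $[c,\infty)$ with $b_n\to\infty$ as $n\to\infty$. Then there exists a bijection $\pi:\mathbb{Z}_+\to A$ such that $a_{\pi(n)}\leq b_n$ for each $n\in\mathbb{Z}_+$.
   Context: $\mathbb{Z}_+$ is the set of non-negative integers. *)

(* Defs.v *)
From HB Require Import structures.
From mathcomp Require Import all_boot all_order all_algebra.
From mathcomp Require Import all_classical all_reals all_analysis.

(* Main.v *)
Require Import Defs.
From HB Require Import structures.
From mathcomp Require Import all_boot all_order all_algebra.
From mathcomp Require Import all_classical all_reals all_analysis.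
Import Order.TTheory GRing.Theory Num.Theory.
Local Open Scope classical_set_scope.
Local Open Scope ring_scope.

Lemma big_notin (s : seq nat) : exists k, forall j, (k <= j)%N -> j \notin s.
Proof.
elim: s => [|x s [k Hk]]; first by exists 0%N.
exists (maxn k x.+1) => j Hj; rewrite in_cons negb_or; apply/andP; split.
  by apply/eqP => E; move: Hj; rewrite E geq_max ltnn andbF.
by apply: Hk; move: Hj; rewrite geq_max => /andP[].
Qed.

Lemma notin_ex (s : seq nat) : exists k, k \notin s.
Proof. by have [k Hk] := big_notin s; exists k; apply: Hk. Qed.

Definition first (s : seq nat) : nat := ex_minn (notin_ex s).

Lemma firstP s : first s \notin s /\ forall j, j \notin s -> (first s <= j)%N.
Proof. by rewrite /first; case: ex_minnP. Qed.

Section Core.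
Variables (R : realType) (a b : nat -> R) (c : R).
Hypotheses (hinf : infinite_set [set n | a n <= c]) (hb : forall n, c <= b n)
  (hbinf : b @ \oo --> +oo).

Definition alt (s : seq nat) : nat := xget 0%N [set m | m \notin s /\ a m <= c].

Lemma altP s : alt s \notin s /\ a (alt s) <= c.
Proof.
rewrite /alt; case: xgetP => //; move=> H; exfalso.
have [k Hk] := big_notin s.
apply: hinf; apply: (@sub_finite_set _ _ `I_k) => // m /= Hm.
rewrite ltnNge; apply/negP => Hkm.
by apply: (H m); split => //; apply: Hk.
Qed.

Definition step (s : seq nat) (n : nat) : nat :=
  if a (first s) <= b n then first s else alt s.

Fixpoint hist (n : nat) : seq nat :=
  if n is n'.+1 then rcons (hist n') (step (hist n') n') else [::].

Definition pi n := step (hist n) n.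

Lemma histE n : hist n = map pi (iota 0 n).
Proof.
elim: n => [//|n IH] /=.
change (rcons (hist n) (pi n) = map pi (iota 0 n.+1)).
by rewrite -[n.+1]addn1 iotaD map_cat /= -IH cats1 add0n.
Qed.

Lemma pi_notin n : pi n \notin hist n.
Proof.
rewrite /pi /step; case: ifP => _; first by case: (firstP (hist n)).
by case: (altP (hist n)).
Qed.

Lemma pi_le n : a (pi n) <= b n.
Proof.
rewrite /pi /step; case: ifP => // _.
by apply: le_trans (hb n); case: (altP (hist n)).
Qed.

Lemma pi_inj : injective pi.
Proof.
move=> i j E; case: (ltngtP i j) => // H.
  by have := pi_notin j; rewrite histE -E map_f // mem_iota add0n H.
by have := pi_notin i; rewrite histE E map_f // mem_iota add0n H.
Qed.

Lemma pi_surj k : exists n, pi n = k.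
Proof.
elim/ltn_ind: k => k IH.
have Hj : forall j : 'I_k, exists n, pi n = j by move=> j; apply: IH.
pose t (j : 'I_k) := xget 0%N [set n | pi n = j].
have Ht : forall j : 'I_k, pi (t j) = j.
  by move=> j; rewrite /t; case: xgetP => // H; have [n Hn] := Hj j; case: (H n).
pose T := (\max_(j < k) t j).+1.
have /cvgryPge /(_ (a k)) [N _ HN] := hbinf.
pose n := maxn N T.
have HbN : a k <= b n by apply: HN; rewrite /= leq_maxl.
have [kin|knot] := boolP (k \in hist n).
  by move: kin; rewrite histE => /mapP[i _ ->]; exists i.
exists n; rewrite /pi /step.
suff -> : first (hist n) = k by rewrite HbN.
case: (firstP (hist n)) => H1 H2; apply/eqP; rewrite eqn_leq H2 //=.
rewrite leqNgt; apply/negP => Hlt.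
move: H1 => /negP; apply; rewrite histE; apply/mapP.
exists (t (Ordinal Hlt)); last first.
  by rewrite (Ht (Ordinal Hlt)) /= -histE.
rewrite mem_iota /= add0n.
apply: leq_trans (leq_maxr N T); rewrite /T ltnS.
exact: (leq_bigmax (Ordinal Hlt)).
Qed.

Lemma core : exists p : nat -> nat, bijective p /\ forall n, a (p n) <= b n.
Proof.
exists pi; split; last exact: pi_le.
pose g k := xget 0%N [set n | pi n = k].
have Hg : forall k, pi (g k) = k.
  by move=> k; rewrite /g; case: xgetP => // H; have [n Hn] := pi_surj k; case: (H n).
exists g => [n|k]; last exact: Hg.
by apply: pi_inj; rewrite Hg.
Qed.
End Core.
Lemma nat_bij (A : Type) (hAc : countable [set: A]) (hAi : infinite_set [set: A]) :
  exists e : nat -> A, bijective e.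
Proof.
have /card_esym/card_bijP[f [g fK gK]] := eq_card_nat hAc hAi.
have mT : forall (T : Type) (x : T), x \in [set: T] by move=> T x; apply: mem_set.
exists (fun n => proj1_sig (f (exist _ n (mT _ n)))).
exists (fun x => proj1_sig (g (exist _ x (mT _ x)))).
  move=> n /=.
  have -> : exist _ (proj1_sig (f (exist _ n (mT _ n)))) (mT _ _) = f (exist _ n (mT _ n)).
    by apply: val_inj.
  by rewrite fK.
move=> x /=.
have -> : exist _ (proj1_sig (g (exist _ x (mT _ x)))) (mT _ _) = g (exist _ x (mT _ x)).
  by apply: val_inj.
by rewrite gK.
Qed.

Theorem lemma2p2 (R : realType) (A : Type) (a : A -> R) (b : nat -> R) (c : R)
  (hAc : countable [set: A]) (hAi : infinite_set [set: A])
  (ha0 : forall n, 0 <= a n)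
  (hc : 0 < c) (hinf : infinite_set [set n | a n <= c])
  (hb : forall n, c <= b n)
  (hbinf : b @ \oo --> +oo) :
  exists pi : nat -> A, bijective pi /\ forall n, a (pi n) <= b n.
Proof.
have [e [e' eK e'K]] := @nat_bij A hAc hAi.
have hinf' : infinite_set [set n | (a \o e) n <= c].
  move=> /(finite_image e) H; apply: hinf; apply: sub_finite_set H => x /= Hx.
  by exists (e' x); rewrite /= e'K.
have [p [Hp Hle]] := @core R (a \o e) b c hinf' hb hbinf.
exists (e \o p); split; last exact: Hle.
by apply: bij_comp => //; exists e'.
Qed.
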